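(* Let $a<b$ be real numbers and let $h,g:[a,b)\to\mathbb{R}$ be continuous functions which are differentiable on $(a,b)$, with $h'(t)>0$ for all $t\in(a,b)$, and such that $h$ is increasing and not constant on any neighborhood of $a$. For $x\in(a,b)$ let $\xi(x)$ be the supremum of the set of numbers $\tau\in(a,x)$ satisfying $$\frac{g(x)-g(a)}{h(x)-h(a)}=\frac{g'(\tau)}{h'(\tau)}$$ (this set is nonempty by Cauchy's mean value theorem). Suppose that the limit $\lim_{x\to a}\frac{g(x)-g(a)}{h(x)-h(a)}$ exists and is finite. Then $$\varlimsup_{x\to a}\frac{h(\xi(x))-h(a)}{h(x)-h(a)}\ \geq\ \frac1e.$$
   Context: Limits at $a$ are right-hand limits. *)

(* Defs.v *)
From Stdlib Require Import Reals.
From Coquelicot Require Import Coquelicot.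
Open Scope R_scope.

Definition cauchy_quot (h g : R -> R) (a x : R) : R :=
  (g x - g a) / (h x - h a).

Definition xi (h g : R -> R) (a x : R) : R :=
  real (Lub_Rbar (fun tau => a < tau < x /\
          cauchy_quot h g a x = Derive g tau / Derive h tau)).

Definition limsup_right (f : R -> R) (a b : R) : Rbar :=
  Glb_Rbar (fun y => exists delta, 0 < delta /\
     Finite y = Lub_Rbar (fun v => exists x, a < x < a + delta /\ x < b /\ v = f x)).

(* Main.v *)
Require Import Defs.
From Stdlib Require Import Reals Lra Lia Classical ClassicalEpsilon.
From Coquelicot Require Import Coquelicot.
Open Scope R_scope.

Lemma right_lim_eps (f : R -> R) a l : filterlim f (at_right a) (locally l) ->
  forall eps, 0 < eps -> exists eta, 0 < eta /\
    forall t, a < t < a + eta -> Rabs (f t - l) < eps.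
Proof.
  intros Hf eps Heps.
  assert (Hb := Hf (fun y => Rabs (y - l) < eps)).
  destruct Hb as [d Hd].
  - exists (mkposreal eps Heps). intros y Hy. exact Hy.
  - exists d. split; [apply cond_pos|]. intros t Ht. apply Hd.
    + change (Rabs (t - a) < d). rewrite Rabs_pos_eq; lra.
    + lra.
Qed.

Lemma pos_div_pos X k : 0 < k -> 0 < X / k -> 0 < X.
Proof.
  intros Hk H. replace X with (X / k * k) by (field; lra). nra.
Qed.

Lemma deriv_pos_right (f : R -> R) u v : u < v -> ex_derive f u -> 0 < Derive f u ->
  exists t, u < t <= v /\ f u < f t.
Proof.
  intros Huv Hd Hp.
  assert (H := Derive_correct f u Hd). apply is_derive_Reals in H.
  destruct (H (Derive f u) Hp) as [d Hdl].
  pose proof (cond_pos d) as Hdp.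
  set (k := Rmin (d/2) (v-u)).
  assert (Hk : 0 < k) by (unfold k; apply Rmin_glb_lt; lra).
  assert (Hk2 : k <= v - u) by apply Rmin_r.
  assert (Hk3 : k < d) by (unfold k; pose proof (Rmin_l (d/2) (v-u)); lra).
  assert (Hk0 : k <> 0) by lra.
  assert (Hka : Rabs k < d) by (rewrite Rabs_pos_eq; lra).
  specialize (Hdl k Hk0 Hka).
  exists (u + k). split; [lra|].
  apply Rabs_def2 in Hdl. destruct Hdl as [_ Hlo].
  assert (0 < (f (u+k) - f u)/k) by lra.
  apply pos_div_pos in H0; lra.
Qed.

Lemma deriv_neg_left (f : R -> R) u v : u < v -> ex_derive f v -> Derive f v < 0 ->
  exists t, u <= t < v /\ f v < f t.
Proof.
  intros Huv Hd Hp.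
  assert (H := Derive_correct f v Hd). apply is_derive_Reals in H.
  assert (Hp' : 0 < - Derive f v) by lra.
  destruct (H _ Hp') as [d Hdl].
  pose proof (cond_pos d) as Hdp.
  set (k := Rmin (d/2) (v-u)).
  assert (Hk : 0 < k) by (unfold k; apply Rmin_glb_lt; lra).
  assert (Hk2 : k <= v - u) by apply Rmin_r.
  assert (Hk3 : k < d) by (unfold k; pose proof (Rmin_l (d/2) (v-u)); lra).
  assert (Hk0 : -k <> 0) by lra.
  assert (Hka : Rabs (-k) < d) by (rewrite Rabs_Ropp, Rabs_pos_eq; lra).
  specialize (Hdl (-k) Hk0 Hka).
  exists (v + - k). split; [lra|].
  apply Rabs_def2 in Hdl. destruct Hdl as [Hhi _].
  assert (0 < (f (v + -k) - f v)/k).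
  { replace ((f (v + -k) - f v)/k) with (- ((f (v + - k) - f v) / - k)) by (field; lra). lra. }
  apply pos_div_pos in H0; lra.
Qed.

Lemma darboux (f : R -> R) u v : u < v -> (forall t, u <= t <= v -> ex_derive f t) ->
  0 < Derive f u -> Derive f v < 0 -> exists t, u < t < v /\ Derive f t = 0.
Proof.
  intros Huv Hd Hu Hv.
  destruct (continuity_ab_maj f u v) as [M [HM HMr]]. lra.
  { intros c Hc. apply continuity_pt_filterlim. apply (ex_derive_continuous (K:=R_AbsRing) (V:=R_NormedModule)). apply Hd; lra. }
  destruct (Req_dec M u) as [->|HMu].
  { destruct (deriv_pos_right f u v Huv (Hd u ltac:(lra)) Hu) as [t [Ht Hft]].
    specialize (HM t ltac:(lra)); lra. }
  destruct (Req_dec M v) as [->|HMv].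
  { destruct (deriv_neg_left f u v Huv (Hd v ltac:(lra)) Hv) as [t [Ht Hft]].
    specialize (HM t ltac:(lra)); lra. }
  exists M. split; [lra|].
  assert (HdM : ex_derive f M) by (apply Hd; lra).
  rewrite <- (Derive_Reals f M (ex_derive_Reals_0 f M HdM)).
  apply deriv_maximum with u v; try lra.
  intros x Hx1 Hx2; apply HM; lra.
Qed.

Lemma cauchy_mvt (h g : R -> R) u v : u < v -> (forall t, u <= t <= v -> ex_derive h t) ->
  (forall t, u <= t <= v -> ex_derive g t) ->
  exists tau, u < tau < v /\ (g v - g u) * Derive h tau = (h v - h u) * Derive g tau.
Proof.
  intros Huv Hh Hg.
  assert (pr1 : forall c, u < c < v -> derivable_pt h c).
  { intros c Hc. apply ex_derive_Reals_0. apply Hh; lra. }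
  assert (pr2 : forall c, u < c < v -> derivable_pt g c).
  { intros c Hc. apply ex_derive_Reals_0. apply Hg; lra. }
  destruct (MVT h g u v pr1 pr2 Huv) as [c [P Hc]].
  { intros c Hc. apply continuity_pt_filterlim. apply (ex_derive_continuous (K:=R_AbsRing) (V:=R_NormedModule)). apply Hh; lra. }
  { intros c Hc. apply continuity_pt_filterlim. apply (ex_derive_continuous (K:=R_AbsRing) (V:=R_NormedModule)). apply Hg; lra. }
  exists c. split; [exact P|]. rewrite !Derive_Reals in Hc. exact Hc.
Qed.

Lemma seq_contra (p : nat -> R) (m : nat) (rho : R) :
  0 < rho < 1 -> 1 < INR (S m) * (1 - rho) ->
  (forall k, p (S k) < p k) ->
  (forall eps, 0 < eps -> exists N, forall k, (N <= k)%nat -> Rabs (p k) < eps) ->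
  (forall j, p (j + m)%nat - rho * p (S (j + m)) >= (1 - rho) * p j) -> False.
Proof.
  intros Hrho HK Hdec Hlim Hineq.
  assert (Hmon : forall j i, p (j + i)%nat <= p j).
  { intros j i; induction i.
    - rewrite Nat.add_0_r; lra.
    - replace (j + S i)%nat with (S (j + i)) by lia. specialize (Hdec (j+i)%nat); lra. }
  assert (Hnn : forall k, 0 <= p k).
  { intros k. destruct (Rle_lt_dec 0 (p k)) as [|Hn]; [auto|].
    destruct (Hlim (- p k)) as [N HN]; [lra|].
    specialize (HN (k + N)%nat ltac:(lia)). specialize (Hmon k N).
    apply Rabs_def2 in HN. lra. }
  assert (Hpm : 0 < p m) by (specialize (Hdec m); specialize (Hnn (S m)); lra).
  set (V := fun j => p (j + m)%nat - (1 - rho) * sum_f_R0 (fun i => p (j + i)%nat) m).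
  assert (Hshift : forall j, sum_f_R0 (fun i => p (S j + i)%nat) m =
            sum_f_R0 (fun i => p (j + i)%nat) m - p j + p (S (j + m))).
  { intros j.
    assert (E1 := tech5 (fun i => p (j + i)%nat) m).
    assert (E2 := decomp_sum (fun i => p (j + i)%nat) (S m) ltac:(lia)).
    simpl Init.Nat.pred in E2.
    rewrite E1 in E2.
    rewrite (sum_eq (fun i => p (S j + i)%nat) (fun i => p (j + S i)%nat)).
    2:{ intros i _. f_equal. lia. }
    replace (j + S m)%nat with (S (j + m)) in E2 by lia.
    rewrite Nat.add_0_r in E2. lra. }
  assert (HV : forall j, V (S j) <= V j).
  { intros j. unfold V. rewrite Hshift.
    replace (S j + m)%nat with (S (j + m)) by lia.
    specialize (Hineq j). lra. }
  assert (HV0 : forall j, V j <= V 0%nat).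
  { induction j; [lra|]. specialize (HV j); lra. }
  assert (HVm : V 0%nat <= p m - (1 - rho) * (p m * INR (S m))).
  { unfold V. rewrite <- sum_cte. rewrite Nat.add_0_l.
    assert (sum_f_R0 (fun _ => p m) m <= sum_f_R0 (fun i => p (0 + i)%nat) m).
    { apply sum_Rle. intros n Hn. simpl. replace m with (n + (m - n))%nat at 1 by lia. apply Hmon. }
    assert (0 < 1 - rho) by lra.
    apply Rplus_le_compat_l, Ropp_le_contravar, Rmult_le_compat_l; lra. }
  assert (HVj : forall j, - (1 - rho) * (p j * INR (S m)) <= V j).
  { intros j. unfold V. rewrite <- sum_cte.
    assert (sum_f_R0 (fun i => p (j + i)%nat) m <= sum_f_R0 (fun _ => p j) m).
    { apply sum_Rle. intros n Hn. apply Hmon. }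
    specialize (Hnn (j + m)%nat). assert (0 < 1 - rho) by lra.
    assert ((1 - rho) * sum_f_R0 (fun i => p (j + i)%nat) m <= (1 - rho) * sum_f_R0 (fun _ => p j) m)
      by (apply Rmult_le_compat_l; lra).
    lra. }
  set (K := INR (S m) * (1 - rho)).
  assert (Hj : forall j, (K - 1) * p m <= K * p j).
  { intros j. specialize (HV0 j). specialize (HVj j). unfold K. clear -HV0 HVj HVm. lra. }
  destruct (Hlim ((K - 1) * p m / K)) as [N HN].
  { unfold K in *. apply Rdiv_lt_0_compat; [apply Rmult_lt_0_compat|]; lra. }
  specialize (HN N (le_n N)). specialize (Hj N). specialize (Hnn N).
  rewrite Rabs_pos_eq in HN by lra.
  assert (HK1 : 0 < K) by (unfold K in *; lra).
  assert (K * p N < K * ((K - 1) * p m / K)) by (apply Rmult_lt_compat_l; lra).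
  replace (K * ((K - 1) * p m / K)) with ((K-1) * p m) in H by (field; lra).
  lra.
Qed.

Lemma exp_pow_nat x n : exp x ^ n = exp (INR n * x).
Proof.
  induction n.
  - simpl. rewrite Rmult_0_l, exp_0. reflexivity.
  - rewrite S_INR. simpl. rewrite IHn. rewrite <- exp_plus. f_equal. ring.
Qed.

Lemma params (c : R) : 0 < c < / exp 1 -> exists m rho, (1 <= m)%nat /\ 0 < rho < 1 /\
   1 < INR (S m) * (1 - rho) /\ c < rho ^ (S m).
Proof.
  intros [Hc0 Hc1].
  set (beta := - ln c).
  assert (Hb : 1 < beta).
  { unfold beta. rewrite <- exp_Ropp in Hc1.
    assert (ln c < -1). { rewrite <- (ln_exp (-1)). apply ln_increasing; auto. }
    lra. }
  set (alpha := (1 + beta) / 2).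
  assert (Ha1 : 1 < alpha) by (unfold alpha; lra).
  assert (Hab : alpha < beta) by (unfold alpha; lra).
  destruct (INR_archimed 1 (Rmax (alpha * beta / (beta - alpha)) alpha)) as [n Hn]; [lra|].
  rewrite Rmult_1_r in Hn.
  assert (Hn1 : alpha * beta / (beta - alpha) < INR n) by (pose proof (Rmax_l (alpha * beta / (beta - alpha)) alpha); lra).
  assert (Hn2 : alpha < INR n) by (pose proof (Rmax_r (alpha * beta / (beta - alpha)) alpha); lra).
  destruct n as [|m]. { simpl in Hn2. lra. }
  exists m, (1 - alpha / INR (S m)).
  assert (HnP : 0 < INR (S m)) by lra.
  assert (Hy1 : alpha / INR (S m) < 1).
  { apply (Rmult_lt_reg_r (INR (S m))); auto. unfold Rdiv. rewrite Rmult_assoc, Rinv_l; lra. }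
  assert (Hy0 : 0 < alpha / INR (S m)) by (apply Rdiv_lt_0_compat; lra).
  split; [|split; [lra|split]].
  - destruct m; [simpl in Hn2; lra | lia].
  - replace (INR (S m) * (1 - (1 - alpha / INR (S m)))) with alpha by (field; lra). lra.
  - set (y := alpha / INR (S m)) in *.
    assert (Hlow : exp (- (y / (1 - y))) <= 1 - y).
    { assert (E := exp_ineq1_le (y / (1 - y))).
      replace (1 + y / (1 - y)) with (/ (1 - y)) in E by (field; lra).
      rewrite exp_Ropp.
      apply Rinv_le_contravar in E; [|apply Rinv_0_lt_compat; lra].
      rewrite Rinv_inv in E. exact E. }
    assert (Hpow : exp (- (y / (1 - y))) ^ S m <= (1 - y) ^ S m).
    { apply pow_incr. split; [left; apply exp_pos | exact Hlow]. }
    rewrite exp_pow_nat in Hpow.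
    assert (Hkey : INR (S m) * - (y / (1 - y)) > - beta).
    { unfold y.
      replace (INR (S m) * - (alpha / INR (S m) / (1 - alpha / INR (S m))))
        with (- (alpha * INR (S m) / (INR (S m) - alpha))) by (field; lra).
      apply Ropp_lt_contravar.
      apply (Rmult_lt_reg_r (INR (S m) - alpha)); [lra|].
      unfold Rdiv. rewrite Rmult_assoc, Rinv_l, Rmult_1_r by lra.
      assert (alpha * beta < INR (S m) * (beta - alpha)).
      { assert (H1 := Rmult_lt_compat_r (beta - alpha) _ _ ltac:(lra) Hn1).
        replace (alpha*beta/(beta-alpha)*(beta-alpha)) with (alpha*beta) in H1 by (field; lra).
        exact H1. }
      nra. }
    assert (c = exp (- beta)) by (unfold beta; rewrite Ropp_involutive, exp_ln; auto).
    assert (exp (- beta) < exp (INR (S m) * - (y / (1 - y)))) by (apply exp_increasing; lra).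
    lra.
Qed.

Lemma pow_le1 r n : 0 <= r <= 1 -> r ^ n <= 1.
Proof.
  intros Hr. induction n; simpl; [lra|].
  assert (0 <= r ^ n) by (apply pow_le; lra). nra.
Qed.

Lemma pow_le_mono r i n : 0 <= r <= 1 -> (i <= n)%nat -> r ^ n <= r ^ i.
Proof.
  intros Hr Hin. replace n with (i + (n - i))%nat by lia. rewrite pow_add.
  assert (0 <= r ^ i) by (apply pow_le; lra).
  assert (r ^ (n - i) <= 1) by (apply pow_le1; lra).
  assert (0 <= r ^ (n - i)) by (apply pow_le; lra). nra.
Qed.

Lemma div_le_mul X d c : 0 < d -> X / d <= c -> X <= c * d.
Proof.
  intros Hd H. apply Rmult_le_compat_r with (r := d) in H; [|lra].
  replace (X / d * d) with X in H by (field; lra). exact H.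
Qed.

Lemma pos_of_mul X Y : 0 < Y -> 0 < X * Y -> 0 < X.
Proof.
  intros HY H. destruct (Rle_lt_dec X 0) as [Hx|Hx]; [|exact Hx].
  assert (X * Y <= 0 * Y) by (apply Rmult_le_compat_r; lra). lra.
Qed.

Theorem theorem4 (a b : R) (h g : R -> R) :
  a < b ->
  (* continuity on [a,b): right-continuity at a, continuity on (a,b) *)
  filterlim h (at_right a) (locally (h a)) ->
  filterlim g (at_right a) (locally (g a)) ->
  (forall t, a < t < b -> continuous h t) ->
  (forall t, a < t < b -> continuous g t) ->
  (* differentiability on (a,b) *)
  (forall t, a < t < b -> ex_derive h t) ->
  (forall t, a < t < b -> ex_derive g t) ->
  (forall t, a < t < b -> 0 < Derive h t) ->
  (* h increasing on [a,b) and not constant on any neighbourhood of a *)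
  (forall x y, a <= x -> x <= y -> y < b -> h x <= h y) ->
  (forall delta, 0 < delta -> exists x, a < x < a + delta /\ x < b /\ h x <> h a) ->
  (* the limit of the Cauchy quotient at a+ exists and is finite *)
  (exists l : R, filterlim (fun x => cauchy_quot h g a x) (at_right a) (locally l)) ->
  Rbar_le (Finite (/ exp 1))
    (limsup_right (fun x => (h (xi h g a x) - h a) / (h x - h a)) a b).
Proof.
  intros Hab Hhc Hgc Hhcont Hgcont Hhd Hgd Hhp Hmono Hnc [L HL].
  unfold limsup_right.
  match goal with |- Rbar_le _ (Glb_Rbar ?E) => destruct (Glb_Rbar_correct E) as [_ Hglb] end.
  apply Hglb. intros y [delta [Hdelta Hy]].
  simpl. destruct (Rle_lt_dec (/ exp 1) y) as [Hle|Hlt]; [exact Hle|]. exfalso.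
  assert (Hf : forall x, a < x < a + delta -> x < b ->
     (h (xi h g a x) - h a) / (h x - h a) <= y).
  { intros x Hx Hxb.
    match type of Hy with _ = Lub_Rbar ?E => destruct (Lub_Rbar_correct E) as [Hub _] end.
    assert (HH := Hub _ (ex_intro _ x (conj Hx (conj Hxb eq_refl)))).
    rewrite <- Hy in HH. exact HH. }
  set (c := Rmax y (/ exp 2)).
  assert (Hc : 0 < c < / exp 1).
  { assert (0 < / exp 2) by (apply Rinv_0_lt_compat, exp_pos).
    assert (/ exp 2 < / exp 1).
    { apply Rinv_lt_contravar. apply Rmult_lt_0_compat; apply exp_pos.
      apply exp_increasing; lra. }
    split. unfold c. pose proof (Rmax_r y (/ exp 2)); lra.
    unfold c. apply Rmax_lub_lt; lra. }
  assert (Hf' : forall x, a < x < a + delta -> x < b ->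
     (h (xi h g a x) - h a) / (h x - h a) <= c).
  { intros x Hx Hxb. pose proof (Rmax_l y (/ exp 2)). specialize (Hf x Hx Hxb). unfold c; lra. }
  clear Hf Hy Hglb.
  assert (HposH : forall t, a < t < b -> h a < h t).
  { intros t Ht. destruct (Hnc (t - a)) as [x [Hx [Hxb Hne]]]; [lra|].
    assert (h a <= h x) by (apply Hmono; lra).
    assert (h x <= h t) by (apply Hmono; lra).
    destruct (Req_dec (h a) (h x)); [congruence|lra]. }
  assert (Hxi : forall x, a < x < b -> forall t, a < t < x ->
     cauchy_quot h g a x = Derive g t / Derive h t -> h t <= h (xi h g a x)).
  { intros x Hx t Ht Heq. unfold xi.
    destruct (Lub_Rbar_correct (fun tau => a < tau < x /\
          cauchy_quot h g a x = Derive g tau / Derive h tau)) as [Hub Hlub].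
    assert (H1 := Hub t (conj Ht Heq)).
    assert (H2 : Rbar_le (Lub_Rbar (fun tau => a < tau < x /\
          cauchy_quot h g a x = Derive g tau / Derive h tau)) x).
    { apply Hlub. intros z [Hz _]. simpl; lra. }
    revert H1 H2.
    destruct (Lub_Rbar (fun tau => a < tau < x /\
          cauchy_quot h g a x = Derive g tau / Derive h tau)) as [r| |];
      simpl; intros H1 H2; try contradiction.
    apply Hmono; lra. }
  assert (NZ : forall x, a < x < a + delta -> x < b -> forall t, a < t < x ->
     c * (h x - h a) < h t - h a -> Derive g t / Derive h t <> cauchy_quot h g a x).
  { intros x Hx Hxb t Ht Hw Heq. symmetry in Heq.
    assert (Hx1 := Hxi x ltac:(lra) t Ht Heq).
    assert (Hx2 := Hf' x Hx Hxb).
    assert (0 < h x - h a) by (specialize (HposH x ltac:(lra)); lra).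
    apply div_le_mul in Hx2; [|lra]. lra. }
  assert (HF : forall k s, a < s < b ->
     ex_derive (fun s => g s - k * h s) s /\
     Derive (fun s => g s - k * h s) s = Derive h s * (Derive g s / Derive h s - k)).
  { intros k s Hs. assert (Hp := Hhp s Hs).
    assert (E1 : ex_derive (fun s => g s - k * h s) s).
    { apply (ex_derive_minus (K:=R_AbsRing) (V:=R_NormedModule) g (fun s => k * h s)).
      apply Hgd; auto. apply ex_derive_scal, Hhd; auto. }
    split; [exact E1|].
    rewrite (Derive_minus g (fun s => k * h s)).
    2: apply Hgd; auto. 2: apply ex_derive_scal, Hhd; auto.
    rewrite Derive_scal. field. lra. }
  assert (Dich : forall x, a < x < a + delta -> x < b ->
     (forall t, a < t < x -> c * (h x - h a) < h t - h a ->
         cauchy_quot h g a x < Derive g t / Derive h t) \/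
     (forall t, a < t < x -> c * (h x - h a) < h t - h a ->
         Derive g t / Derive h t < cauchy_quot h g a x)).
  { intros x Hx Hxb.
    destruct (classic (forall t, a < t < x -> c * (h x - h a) < h t - h a ->
         cauchy_quot h g a x < Derive g t / Derive h t)) as [Hl|Hn]; [left; exact Hl|right].
    intros t2 Ht2 Hw2.
    destruct (Rlt_le_dec (Derive g t2 / Derive h t2) (cauchy_quot h g a x)) as [|Hge]; [auto|exfalso].
    apply Hn. intros t1 Ht1 Hw1.
    destruct (Rlt_le_dec (cauchy_quot h g a x) (Derive g t1 / Derive h t1)) as [|Hle1]; [auto|exfalso].
    assert (N1 := NZ x Hx Hxb t1 Ht1 Hw1).
    assert (N2 := NZ x Hx Hxb t2 Ht2 Hw2).
    set (k := cauchy_quot h g a x) in *.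
    assert (Hlt1 : Derive g t1 / Derive h t1 < k) by (destruct Hle1; [auto|congruence]).
    assert (Hlt2 : k < Derive g t2 / Derive h t2) by (destruct Hge; [auto|congruence]).
    assert (Hz : exists t, ((t1 < t < t2) \/ (t2 < t < t1)) /\
                 Derive (fun s => g s - k * h s) t = 0).
    { destruct (Rlt_le_dec t2 t1) as [H21|H12].
      - destruct (darboux (fun s => g s - k * h s) t2 t1 H21) as [t [Ht Ht0]].
        + intros s Hs. apply HF; lra.
        + destruct (HF k t2 ltac:(lra)) as [_ ->]. apply Rmult_lt_0_compat; [apply Hhp; lra|lra].
        + destruct (HF k t1 ltac:(lra)) as [_ ->].
          assert (0 < Derive h t1) by (apply Hhp; lra).
          assert (0 < Derive h t1 * (k - Derive g t1 / Derive h t1)) by (apply Rmult_lt_0_compat; lra).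
          nra.
        + exists t. split; [right; exact Ht| exact Ht0].
      - assert (H12' : t1 < t2).
        { destruct H12 as [|E]; [auto|]. subst t2. lra. }
        destruct (darboux (fun s => - (g s - k * h s)) t1 t2 H12') as [t [Ht Ht0]].
        + intros s Hs. apply (ex_derive_opp (K:=R_AbsRing) (V:=R_NormedModule) (fun s => g s - k * h s)).
          apply HF; lra.
        + rewrite Derive_opp. destruct (HF k t1 ltac:(lra)) as [_ ->].
          assert (0 < Derive h t1) by (apply Hhp; lra).
          assert (0 < Derive h t1 * (k - Derive g t1 / Derive h t1)) by (apply Rmult_lt_0_compat; lra).
          nra.
        + rewrite Derive_opp. destruct (HF k t2 ltac:(lra)) as [_ ->].
          assert (0 < Derive h t2) by (apply Hhp; lra).
          assert (0 < Derive h t2 * (Derive g t2 / Derive h t2 - k)) by (apply Rmult_lt_0_compat; lra).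
          nra.
        + exists t. split; [left; exact Ht|]. rewrite Derive_opp in Ht0. lra. }
    destruct Hz as [t [Ht Ht0]].
    assert (Hta : a < t < x) by lra.
    assert (Hw : c * (h x - h a) < h t - h a).
    { destruct Ht as [Ht|Ht].
      - assert (h t1 <= h t) by (apply Hmono; lra). lra.
      - assert (h t2 <= h t) by (apply Hmono; lra). lra. }
    apply (NZ x Hx Hxb t Hta Hw).
    destruct (HF k t ltac:(lra)) as [_ E]. rewrite E in Ht0.
    assert (0 < Derive h t) by (apply Hhp; lra).
    apply Rmult_integral in Ht0. destruct Ht0. lra. fold k. lra. }
  assert (Hcau : forall u v, a < u < v -> v < b -> exists tau, u < tau < v /\
     g v - g u = Derive g tau / Derive h tau * (h v - h u)).
  { intros u v Hu Hv.
    destruct (cauchy_mvt h g u v) as [tau [Ht Heq]]; try lra.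
    - intros t Ht; apply Hhd; lra.
    - intros t Ht; apply Hgd; lra.
    - exists tau. split; [exact Ht|].
      assert (0 < Derive h tau) by (apply Hhp; lra).
      apply (Rmult_eq_reg_r (Derive h tau)); [|lra].
      rewrite Heq. field. lra. }
  set (x0 := a + Rmin (delta / 2) ((b - a) / 2)).
  assert (Hx0 : a < x0 < a + delta /\ x0 < b).
  { unfold x0. pose proof (Rmin_l (delta/2) ((b-a)/2)). pose proof (Rmin_r (delta/2) ((b-a)/2)).
    assert (0 < Rmin (delta / 2) ((b - a) / 2)) by (apply Rmin_glb_lt; lra). lra. }
  destruct (params c Hc) as [m [rho [Hm1 [Hrho [HK Hrc]]]]].
  set (H0 := h x0 - h a).
  assert (HH0 : 0 < H0) by (unfold H0; specialize (HposH x0 ltac:(lra)); lra).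
  assert (Hex : forall v, 0 < v <= H0 -> exists x, a < x <= x0 /\ h x - h a = v).
  { intros v [Hv1 Hv2].
    destruct (Req_dec v H0) as [->|Hne]; [exists x0; split; [lra|reflexivity]|].
    destruct (right_lim_eps h a (h a) Hhc v Hv1) as [eta [Heta Heta']].
    set (a' := a + Rmin (eta/2) ((x0-a)/2)).
    assert (Ha' : a < a' < x0 /\ a' < a + eta).
    { unfold a'. pose proof (Rmin_l (eta/2) ((x0-a)/2)). pose proof (Rmin_r (eta/2) ((x0-a)/2)).
      assert (0 < Rmin (eta/2) ((x0-a)/2)) by (apply Rmin_glb_lt; lra). lra. }
    assert (Hha' := Heta' a' ltac:(lra)). apply Rabs_def2 in Hha'.
    assert (Hcont : forall t, a' <= t <= x0 -> continuity_pt (fun t => h t - h a - v) t).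
    { intros t Ht. apply continuity_pt_filterlim.
      apply (continuous_minus (U:=R_UniformSpace) (K:=R_AbsRing) (V:=R_NormedModule)
               (fun t => h t - h a) (fun _ => v)).
      apply (continuous_minus (U:=R_UniformSpace) (K:=R_AbsRing) (V:=R_NormedModule) h (fun _ => h a)).
      apply Hhcont; lra. apply continuous_const. apply continuous_const. }
    assert (Hlo : h a' - h a - v < 0) by lra.
    assert (Hhi : 0 < h x0 - h a - v) by (unfold H0 in *; lra).
    destruct (Ranalysis5.IVT_interv (fun t => h t - h a - v) a' x0 Hcont ltac:(lra) Hlo Hhi) as [z [Hz Hz0]].
    exists z. split; [lra|]. simpl in Hz0. lra. }
  assert (Hseq : forall k : nat, exists x, a < x <= x0 /\ h x - h a = rho ^ k * H0).
  { intros k. apply Hex. split.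
    - apply Rmult_lt_0_compat; [apply pow_lt; lra| exact HH0].
    - assert (rho ^ k <= 1) by (apply pow_le1; lra). nra. }
  set (xs := fun k => proj1_sig (constructive_indefinite_description _ (Hseq k))).
  assert (Hxs : forall k, a < xs k <= x0 /\ h (xs k) - h a = rho ^ k * H0).
  { intros k. unfold xs. apply (proj2_sig (constructive_indefinite_description _ (Hseq k))). }
  clearbody xs.
  assert (Hr : forall k, a < xs k < a + delta /\ xs k < b).
  { intros k. specialize (Hxs k). lra. }
  assert (HPk : forall k, 0 < rho ^ k * H0).
  { intros k. apply Rmult_lt_0_compat; [apply pow_lt; lra| exact HH0]. }
  assert (HSk : forall k, rho ^ S k * H0 = rho * (rho ^ k * H0)) by (intros k; simpl; ring).
  assert (Hxs_lt : forall k, xs (S k) < xs k).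
  { intros k. destruct (Rlt_le_dec (xs (S k)) (xs k)) as [|Hle]; [auto|exfalso].
    assert (h (xs k) <= h (xs (S k))) by (apply Hmono; [specialize (Hxs k); lra | exact Hle | apply Hr]).
    destruct (Hxs k) as [_ E1]. destruct (Hxs (S k)) as [_ E2].
    rewrite HSk in E2. specialize (HPk k).
    assert (rho * (rho ^ k * H0) < rho ^ k * H0) by nra. lra. }
  assert (Hxs_mon : forall j i, xs (j + i)%nat <= xs j).
  { intros j i. induction i. rewrite Nat.add_0_r; lra.
    replace (j + S i)%nat with (S (j + i)) by lia. specialize (Hxs_lt (j + i)%nat). lra. }
  assert (Hqg : forall x, a < x < b -> cauchy_quot h g a x * (h x - h a) = g x - g a).
  { intros x Hx. unfold cauchy_quot. specialize (HposH x Hx). field. lra. }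
  assert (Hwin : forall j i, (1 <= i <= S m)%nat ->
     xs (j + i)%nat < xs j /\ c * (h (xs j) - h a) < h (xs (j + i)%nat) - h a).
  { intros j i Hi. split.
    - destruct i as [|i]; [lia|]. replace (j + S i)%nat with (S (j + i)) by lia.
      specialize (Hxs_lt (j + i)%nat). specialize (Hxs_mon j i). lra.
    - destruct (Hxs j) as [_ Ej]. destruct (Hxs (j + i)%nat) as [_ Eji].
      rewrite Ej, Eji, pow_add.
      assert (rho ^ S m <= rho ^ i) by (apply pow_le_mono; lra || lia).
      specialize (HPk j).
      replace (rho ^ j * rho ^ i * H0) with (rho ^ i * (rho ^ j * H0)) by ring.
      apply Rmult_lt_compat_r; lra. }
  set (Sg := fun k s => forall t, a < t < xs k -> c * (h (xs k) - h a) < h t - h a ->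
      0 < s * (Derive g t / Derive h t - cauchy_quot h g a (xs k))).
  assert (Hstep : forall s j k, Sg j s -> (j <= k)%nat ->
     c * (h (xs j) - h a) < h (xs (S k)) - h a ->
     0 < s * ((cauchy_quot h g a (xs k) * (rho ^ k * H0) - cauchy_quot h g a (xs (S k)) * (rho ^ S k * H0))
              - cauchy_quot h g a (xs j) * (rho ^ k * H0 - rho ^ S k * H0))).
  { intros s j k Hs Hjk Hw.
    assert (Hk1 := Hxs_lt k).
    destruct (Hr k) as [_ Hkb]. destruct (Hr (S k)) as [HSka _].
    destruct (Hcau (xs (S k)) (xs k) ltac:(lra) Hkb) as [tau [Ht Heq]].
    assert (Hjk' : xs k <= xs j).
    { replace k with (j + (k - j))%nat by lia. apply Hxs_mon. }
    assert (Htau : 0 < s * (Derive g tau / Derive h tau - cauchy_quot h g a (xs j))).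
    { apply Hs. lra. assert (h (xs (S k)) <= h tau) by (apply Hmono; lra). lra. }
    destruct (Hxs k) as [_ Ek]. destruct (Hxs (S k)) as [_ ESk].
    rewrite <- Ek, <- ESk.
    rewrite (Hqg (xs k)) by lra. rewrite (Hqg (xs (S k))) by lra.
    replace (g (xs k) - g a - (g (xs (S k)) - g a)) with (g (xs k) - g (xs (S k))) by ring.
    rewrite Heq.
    replace (s * (Derive g tau / Derive h tau * (h (xs k) - h (xs (S k))) -
      cauchy_quot h g a (xs j) * (h (xs k) - h a - (h (xs (S k)) - h a))))
     with ((s * (Derive g tau / Derive h tau - cauchy_quot h g a (xs j))) * (h (xs k) - h (xs (S k)))) by ring.
    apply Rmult_lt_0_compat; [exact Htau|].
    rewrite HSk in ESk. specialize (HPk k). assert (rho * (rho ^ k * H0) < rho ^ k * H0) by nra. lra. }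
  assert (Hdecr : forall s k, Sg k s ->
     0 < s * (cauchy_quot h g a (xs k) - cauchy_quot h g a (xs (S k)))).
  { intros s k Hs.
    assert (W := Hwin k 1%nat ltac:(lia)). replace (k + 1)%nat with (S k) in W by lia.
    assert (E := Hstep s k k Hs (le_n k) (proj2 W)).
    rewrite HSk in E.
    replace (s * (cauchy_quot h g a (xs k) * (rho ^ k * H0) -
       cauchy_quot h g a (xs (S k)) * (rho * (rho ^ k * H0)) -
       cauchy_quot h g a (xs k) * (rho ^ k * H0 - rho * (rho ^ k * H0))))
      with ((s * (cauchy_quot h g a (xs k) - cauchy_quot h g a (xs (S k)))) * (rho * (rho ^ k * H0))) in E by ring.
    apply pos_of_mul in E; [exact E|]. specialize (HPk k). apply Rmult_lt_0_compat; lra. }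
  assert (Hs0 : exists s, (s = 1 \/ s = -1) /\ Sg 0%nat s).
  { destruct (Dich (xs 0%nat) (proj1 (Hr 0%nat)) (proj2 (Hr 0%nat))) as [Hl|Hrr].
    - exists 1. split; [left; reflexivity|]. intros t Ht Hw. specialize (Hl t Ht Hw). lra.
    - exists (-1). split; [right; reflexivity|]. intros t Ht Hw. specialize (Hrr t Ht Hw). lra. }
  destruct Hs0 as [s [Hs1 Hs0]].
  assert (Hsg : forall k, Sg k s).
  { induction k as [|k IH]; [exact Hs0|].
    assert (W1 := Hwin (S k) 1%nat ltac:(lia)). replace (S k + 1)%nat with (S (S k)) in W1 by lia.
    assert (W2 := Hwin k 2%nat ltac:(lia)). replace (k + 2)%nat with (S (S k)) in W2 by lia.
    assert (Hd := Hdecr s k IH).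
    assert (Ht0 : a < xs (S (S k))) by (apply Hr).
    assert (HI := IH (xs (S (S k))) ltac:(lra) (proj2 W2)).
    destruct (Dich (xs (S k)) (proj1 (Hr (S k))) (proj2 (Hr (S k)))) as [Hl|Hrr].
    - assert (Hl2 := Hl (xs (S (S k))) ltac:(lra) (proj2 W1)).
      destruct Hs1 as [-> | ->].
      + intros t Ht Hw. specialize (Hl t Ht Hw). lra.
      + exfalso. lra.
    - assert (Hr2 := Hrr (xs (S (S k))) ltac:(lra) (proj2 W1)).
      destruct Hs1 as [-> | ->].
      + exfalso. lra.
      + intros t Ht Hw. specialize (Hrr t Ht Hw). lra. }
  apply (seq_contra (fun k => s * (cauchy_quot h g a (xs k) - L)) m rho Hrho HK).
  - intros k. specialize (Hdecr s k (Hsg k)). lra.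
  - intros eps Heps.
    destruct (right_lim_eps _ a L HL eps Heps) as [eta [Heta Hq]].
    set (eta' := Rmin (eta / 2) ((x0 - a) / 2)).
    assert (He' : 0 < eta' /\ eta' < eta /\ a + eta' < x0).
    { unfold eta'. pose proof (Rmin_l (eta/2) ((x0-a)/2)). pose proof (Rmin_r (eta/2) ((x0-a)/2)).
      assert (0 < Rmin (eta/2) ((x0-a)/2)) by (apply Rmin_glb_lt; lra). lra. }
    assert (Hpe := HposH (a + eta') ltac:(lra)).
    destruct (pow_lt_1_zero rho ltac:(rewrite Rabs_pos_eq; lra) ((h (a + eta') - h a) / H0))
      as [N HN].
    { apply Rdiv_lt_0_compat; lra. }
    exists N. intros k Hk.
    specialize (HN k Hk). rewrite Rabs_pos_eq in HN by (apply pow_le; lra).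
    assert (Hlt2 : rho ^ k * H0 < h (a + eta') - h a).
    { apply Rmult_lt_compat_r with (r := H0) in HN; [|lra].
      replace ((h (a + eta') - h a) / H0 * H0) with (h (a + eta') - h a) in HN by (field; lra).
      exact HN. }
    assert (Hxk : xs k < a + eta').
    { destruct (Rlt_le_dec (xs k) (a + eta')) as [|Hle]; [auto|exfalso].
      assert (h (a + eta') <= h (xs k)) by (apply Hmono; [lra|exact Hle|apply Hr]).
      destruct (Hxs k) as [_ E]. lra. }
    assert (HQ := Hq (xs k) ltac:(specialize (Hr k); lra)).
    assert (Habs : Rabs s = 1).
    { destruct Hs1 as [-> | ->]; [apply Rabs_R1 | rewrite Rabs_left; lra]. }
    rewrite Rabs_mult, Habs. lra.
  - intros j.
    assert (W := Hwin j (S m) ltac:(lia)). replace (j + S m)%nat with (S (j + m)) in W by lia.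
    assert (E := Hstep s j (j + m)%nat (Hsg j) ltac:(lia) (proj2 W)).
    rewrite HSk in E. rewrite pow_add in E.
    replace (s * (cauchy_quot h g a (xs (j + m)%nat) * (rho ^ j * rho ^ m * H0) -
       cauchy_quot h g a (xs (S (j + m))) * (rho * (rho ^ j * rho ^ m * H0)) -
       cauchy_quot h g a (xs j) * (rho ^ j * rho ^ m * H0 - rho * (rho ^ j * rho ^ m * H0))))
      with ((s * (cauchy_quot h g a (xs (j + m)%nat) - rho * cauchy_quot h g a (xs (S (j + m)))
               - (1 - rho) * cauchy_quot h g a (xs j))) * (rho ^ j * rho ^ m * H0)) in E by ring.
    apply pos_of_mul in E.
    2:{ rewrite <- pow_add. apply HPk. }
    assert (s * (cauchy_quot h g a (xs (j + m)%nat) - L) - rho * (s * (cauchy_quot h g a (xs (S (j + m))) - L))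
       - (1 - rho) * (s * (cauchy_quot h g a (xs j) - L)) =
       s * (cauchy_quot h g a (xs (j + m)%nat) - rho * cauchy_quot h g a (xs (S (j + m)))
               - (1 - rho) * cauchy_quot h g a (xs j))) by ring.
    lra.
Qed.
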